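(* There exists a character $\varepsilon:G_3\to\{1,-1\}$ such that $\varepsilon(g)=-1$ for every hexflection $g$ and $\varepsilon(-I)=-1$.
   Context: $\zeta=(-1+\sqrt{-3})/2$, $\mathcal{E}=\mathbb{Z}[\zeta]$. On $\mathbb{C}^4$, $h(a,b)=\bar a_1b_2+\bar a_2b_1-\bar a_3b_3-\bar a_4b_4$; $G_3=\{g\in\mathrm{GL}(4,\mathcal{E}):h(ga,gb)=h(a,b)\}$. For $b\in\mathcal{E}^4$ with $h(b,b)=-1$ and $\eta$ a primitive sixth root of unity, the hexflection along $b$ is $x\mapsto x-(1-\eta)\frac{h(b,x)}{h(b,b)}b$, an element of $G_3$ of order $6$ fixing the orthogonal complement of $b$ and sending $b$ to $\eta b$. *)

(* Defs.v *)
From HB Require Import structures.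
From mathcomp Require Import all_boot all_order all_algebra all_field.
Set Implicit Arguments. Unset Strict Implicit. Unset Printing Implicit Defensive.
Import Order.TTheory GRing.Theory Num.Theory.
Local Open Scope ring_scope.

Definition zeta : algC := (-1 + sqrtC (-3)) / 2.

Definition eisenstein (x : algC) : Prop :=
  exists a b : int, x = a%:~R + b%:~R * zeta.

Definition mx_over_E m n (A : 'M[algC]_(m, n)) : Prop :=
  forall i j, eisenstein (A i j).

Definition Jh : 'M[algC]_4 :=
  \matrix_(i < 4, j < 4)
    (if ((i == 0 :> nat) && (j == 1 :> nat)) || ((i == 1 :> nat) && (j == 0 :> nat)) then 1
     else if (i == j) && (2 <= i)%N then -1 else 0).

Definition adjC m n (A : 'M[algC]_(m, n)) : 'M[algC]_(n, m) := (map_mx (@Num.conj algC) A)^T.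

(* h(a,b) = conj(a1) b2 + conj(a2) b1 - conj(a3) b3 - conj(a4) b4 *)
Definition hform (a b : 'cV[algC]_4) : algC := (adjC a *m Jh *m b) 0 0.

Definition GL4E (g : 'M[algC]_4) : Prop :=
  mx_over_E g /\ exists g' : 'M[algC]_4,
    mx_over_E g' /\ g *m g' = 1%:M /\ g' *m g = 1%:M.

Definition G3 (g : 'M[algC]_4) : Prop :=
  GL4E g /\ forall a b : 'cV[algC]_4, hform (g *m a) (g *m b) = hform a b.

(* matrix of x |-> x - (1 - eta) h(b,x)/h(b,b) b *)
Definition hexflection (b : 'cV[algC]_4) (eta : algC) : 'M[algC]_4 :=
  1%:M - ((1 - eta) / hform b b) *: (b *m adjC b *m Jh).

Definition is_hexflection (g : 'M[algC]_4) : Prop :=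
  exists (b : 'cV[algC]_4) (eta : algC),
    mx_over_E b /\ hform b b = -1 /\ 6.-primitive_root eta /\ g = hexflection b eta.

(* Main.v *)
Require Import Defs.
From HB Require Import structures.
From mathcomp Require Import all_boot all_order all_algebra all_field all_fingroup.
From mathcomp Require Import ring zify.
From Stdlib Require Import ClassicalEpsilon.
Import Order.TTheory GRing.Theory Num.Theory.
Local Open Scope ring_scope.

Definition F := 'Z_3.
Definition V := (F * F * F * F)%type.
Definition Z3s : seq F := [:: 0; 1; 2].
Definition P2 := [seq (a,b) | a <- Z3s, b <- Z3s].
Definition P3 := [seq (p,c) | p <- P2, c <- Z3s].
Definition Venum : seq V := [seq (p,d) | p <- P3, d <- Z3s].

Lemma mem_Z3s (a : F) : a \in Z3s.
Proof. by case: a => [[|[|[|n]]] Hn]. Qed.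

Lemma mem_Venum (x : V) : x \in Venum.
Proof.
case: x => [[[a b] c] d].
by apply: allpairs_f; [apply: allpairs_f; [apply: allpairs_f|]|]; apply: mem_Z3s.
Qed.

Lemma uniq_Venum : uniq Venum.
Proof. by vm_compute. Qed.

Lemma card_Venum (P : pred V) : #|P| = count P Venum.
Proof.
rewrite -size_filter.
have /card_uniqP <- : uniq (filter P Venum) by rewrite filter_uniq // uniq_Venum.
by apply: eq_card => x; rewrite mem_filter mem_Venum andbT.
Qed.

Definition Bx (x y : V) : F :=
  let: (x0,x1,x2,x3) := x in let: (y0,y1,y2,y3) := y in
  x0 * y1 + x1 * y0 - x2 * y2 - x3 * y3.
Definition qe (x : V) : F := Bx x x.

Definition Jb : 'M[F]_4 :=
  \matrix_(i < 4, j < 4)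
    (if ((i == 0 :> nat) && (j == 1 :> nat)) || ((i == 1 :> nat) && (j == 0 :> nat)) then 1
     else if (i == j) && (2 <= i)%N then -1 else 0).

Definition col4 (x : V) : 'cV[F]_4 :=
  \col_i (let: (a,b,c,d) := x in [:: a; b; c; d]`_i).
Definition unc (c : 'cV[F]_4) : V :=
  (c (inord 0) ord0, c (inord 1) ord0, c (inord 2) ord0, c (inord 3) ord0).

Lemma BxE x y : ((col4 x)^T *m Jb *m col4 y) 0 0 = Bx x y.
Proof.
case: x => [[[x0 x1] x2] x3]; case: y => [[[y0 y1] y2] y3].
rewrite !mxE !big_ord_recl big_ord0 /=.
rewrite !mxE !big_ord_recl !big_ord0 /= !mxE /=.
ring.
Qed.


Lemma col4K : cancel unc col4.
Proof.
move=> c; apply/matrixP => i j; rewrite !mxE (ord1 j).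
by case: i => [[|[|[|[|n]]]] Hn] //=; congr (c _ _); apply: val_inj; rewrite /= inordK.
Qed.

Lemma unc4K : cancel col4 unc.
Proof.
by case=> [[[a b] c] d]; rewrite /unc !mxE !inordK.
Qed.

Definition qm (c : 'cV[F]_4) : F := (c^T *m Jb *m c) 0 0.

Lemma qmE x : qm (col4 x) = qe x.
Proof. by rewrite /qm BxE. Qed.

Definition phi (M : 'M[F]_4) (x : V) : V :=
  if qe x == -1 then unc (M *m col4 x) else x.

Definition pres (M : 'M[F]_4) := forall c, qm (M *m c) = qm c.

Lemma phi_inj M M' : pres M -> M' *m M = 1%:M -> injective (phi M).
Proof.
move=> pM iM x y; rewrite /phi.
have key : forall z, qe (unc (M *m col4 z)) = qe z.
  by move=> z; rewrite -qmE col4K pM qmE.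
case: ifP => hx; case: ifP => hy //.
- move=> /(congr1 col4); rewrite !col4K => /(congr1 (mulmx M')).
  by rewrite !mulmxA iM !mul1mx => /(congr1 unc); rewrite !unc4K.
- by move=> E; move: hy; rewrite -E key hx.
- by move=> E; move: hx; rewrite E key hy.
Qed.

Lemma phiM M N x : pres N -> phi (M *m N) x = phi M (phi N x).
Proof.
move=> pN; rewrite /phi; case hx: (qe x == -1) => //.
by rewrite -qmE (col4K (N *m col4 x)) pN qmE hx mulmxA.
by rewrite hx.
Qed.

Definition pf (M : 'M[F]_4) : {perm V} := insubd (1%g : {perm V}) [ffun x => phi M x].

Lemma pfE M : injective (phi M) -> forall x, pf M x = phi M x.
Proof.
move=> inj x.
have : val (pf M) = [ffun x => phi M x].
  by rewrite insubdK //; apply/injectiveP => a b; rewrite !ffunE; apply: inj.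
by move=> E; rewrite -pvalE E ffunE.
Qed.

Lemma odd_invol (T : finType) n (s : {perm T}) :
  (forall x, s (s x) = x) -> #|[pred x | s x != x]| = n -> odd_perm s = odd n./2.
Proof.
elim/ltn_ind: n s => n IH s invs cn.
case: (posnP n) => [n0|npos].
  have -> : s = 1%g.
    apply/permP => x; rewrite perm1.
    move: cn; rewrite n0 => /card0_eq/(_ x); rewrite !inE /=.
    by move/negbFE/eqP.
  by rewrite odd_perm1 n0.
have /card_gt0P [x] : (0 < #|[pred x | s x != x]|)%N by rewrite cn.
rewrite inE /= => hx.
set y := s x.
pose t := tperm x y.
pose s' := (t * s)%g.
have s'E z : s' z = if z == x then x else if z == y then y else s z.
  rewrite /s' permM; have [->|nx] := eqVneq z x; first by rewrite tpermL invs.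
  have [->|ny] := eqVneq z y; first by rewrite tpermR.
  by rewrite tpermD // eq_sym.
have invs' : forall z, s' (s' z) = z.
  have yx : y != x by [].
  have s'x : s' x = x by rewrite s'E eqxx.
  have s'y : s' y = y by rewrite s'E (negbTE yx) eqxx.
  move=> z; have [->|nx] := eqVneq z x; first by rewrite !s'x.
  have [->|ny] := eqVneq z y; first by rewrite !s'y.
  have h1 : s z != x by apply: contra ny => /eqP e; rewrite /y -e invs.
  have h2 : s z != y by apply: contra nx => /eqP e; rewrite (perm_inj e).
  by rewrite !s'E (negbTE nx) (negbTE ny) (negbTE h1) (negbTE h2) invs.
have e : [pred z | s' z != z] =i [predD1 [predD1 [pred z | s z != z] & x] & y].
  move=> z; rewrite !inE /= s'E.
  have [->|nx] := eqVneq z x; first by rewrite eqxx !andbF.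
  have [->|ny] := eqVneq z y; first by rewrite eqxx.
  by [].
have yx : y != x by [].
have cn2 : n = (#|[pred z | s' z != z]|).+2.
  rewrite (eq_card e) -cn (cardD1 x [pred z | s z != z]).
  rewrite (cardD1 y [predD1 [pred z | s z != z] & x]) !inE /= hx.
  have syy : s y != y by rewrite /y invs eq_sym.
  by rewrite syy.
have -> : s = (t * s')%g by rewrite /s' mulgA tperm2 mul1g.
rewrite odd_mul_tperm (IH _ _ s' invs' erefl); last by rewrite cn2.
by rewrite cn2 /= eq_sym yx.
Qed.

Lemma odd_pf M (f : V -> V) : (forall x, qe x = -1 -> unc (M *m col4 x) = f x) ->
  all (fun x => (qe x == -1) ==> ((qe (f x) == -1) && (f (f x) == x))) Venum ->
  odd (count (fun x => (qe x == -1) && (f x != x)) Venum)./2 ->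
  odd_perm (pf M).
Proof.
move=> hM hall hodd.
pose psi : V -> V := fun x => if qe x == -1 then f x else x.
have phiE : phi M =1 psi.
  by move=> x; rewrite /phi /psi; case: ifP => // /eqP h; rewrite hM.
have hf x : qe x == -1 -> (qe (f x) == -1) && (f (f x) == x).
  by move: hall => /allP /(_ x (mem_Venum x)) /implyP.
have inv x : psi (psi x) = x.
  case h: (qe x == -1); rewrite /psi h /= ?h //.
  by have /andP[h1 /eqP h2] := hf x h; rewrite h1 h2.
have injphi : injective (phi M).
  by move=> a b; rewrite !phiE; apply: (can_inj inv).
have pE x : pf M x = psi x by rewrite pfE // phiE.
rewrite (@odd_invol _ (count (fun x => (qe x == -1) && (f x != x)) Venum) (pf M)) //.
  by move=> x; rewrite !pE inv.
rewrite card_Venum; apply: eq_count => x; rewrite /= pE /psi.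
by case: (qe x == -1) => //=; rewrite eqxx.
Qed.

Definition negV (x : V) : V := let: (a,b,c,d) := x in (-a,-b,-c,-d).
Definition refl (bb x : V) : V :=
  let s := Bx bb x in
  let: (b0,b1,b2,b3) := bb in let: (x0,x1,x2,x3) := x in
  (x0 - s * b0, x1 - s * b1, x2 - s * b2, x3 - s * b3).

Lemma neg_check :
  (all (fun x => (qe x == -1) ==> ((qe (negV x) == -1) && (negV (negV x) == x))) Venum) &&
  odd (count (fun x => (qe x == -1) && (negV x != x)) Venum)./2.
Proof. by vm_compute. Qed.

Lemma refl_check : all (fun bb => (qe bb == -1) ==>
  ((all (fun x => (qe x == -1) ==> ((qe (refl bb x) == -1) && (refl bb (refl bb x) == x))) Venum) &&
  odd (count (fun x => (qe x == -1) && (refl bb x != x)) Venum)./2)) Venum.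
Proof. by vm_compute. Qed.

Lemma negE x : unc ((- 1%:M) *m col4 x) = negV x.
Proof.
by case: x => [[[a b] c] d]; rewrite mulNmx mul1mx /unc !mxE !inordK.
Qed.

Lemma reflE bb x :
  unc ((1%:M - col4 bb *m (col4 bb)^T *m Jb) *m col4 x) = refl bb x.
Proof.
rewrite mulmxBl mul1mx -!mulmxA [(col4 bb)^T *m _]mulmxA.
rewrite [(col4 bb)^T *m Jb *m col4 x]mx11_scalar BxE mul_mx_scalar.
case: x => [[[x0 x1] x2] x3]; case: bb => [[[b0 b1] b2] b3].
by rewrite /unc /refl !mxE !inordK.
Qed.

Lemma odd_neg : odd_perm (pf (- 1%:M)).
Proof.
case/andP: neg_check => h1 h2.
by apply: (@odd_pf _ negV) => // x _; rewrite negE.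
Qed.

Lemma odd_refl bb : qe bb = -1 -> odd_perm (pf (1%:M - col4 bb *m (col4 bb)^T *m Jb)).
Proof.
move=> hb.
move: refl_check => /allP /(_ bb (mem_Venum bb)); rewrite hb eqxx /= => /andP [h1 h2].
by apply: (@odd_pf _ (refl bb)) => // x _; rewrite reflE.
Qed.

Lemma three0 : (3%:R : F) = 0.
Proof. by apply/eqP. Qed.
Lemma m3 : ((-3)%:~R : F) = 0.
Proof. by apply/eqP. Qed.
Lemma two : ((1 + 1)%:~R : F) = -1.
Proof. by apply/eqP. Qed.

Lemma sq3 : sqrtC (-3) ^+ 2 = -3 :> algC.
Proof. by rewrite sqrtCK. Qed.

Lemma zeta_eq : zeta ^+ 2 + zeta + 1 = 0.
Proof.
rewrite /zeta.
have -> : ((-1 + sqrtC (-3)) / 2) ^+ 2 + (-1 + sqrtC (-3)) / 2 + 1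
  = (sqrtC (-3) ^+ 2 + 3) / 4 :> algC.
  by field.
by rewrite sq3 addNr mul0r.
Qed.

Lemma zeta2 : zeta ^+ 2 = - 1 - zeta.
Proof.
apply/eqP; rewrite -subr_eq0; apply/eqP.
by rewrite -[RHS](zeta_eq); ring.
Qed.

Lemma conj_s : (sqrtC (-3))^* = - sqrtC (-3) :> algC.
Proof.
set s := sqrtC (-3).
have c2 : s^* ^+ 2 = -3 by rewrite -rmorphXn /= sq3 rmorphN rmorph_nat.
have : (s^* - s) * (s^* + s) = 0.
  have -> : (s^* - s) * (s^* + s) = s^* ^+ 2 - s ^+ 2 by ring.
  by rewrite c2 sq3 subrr.
move/eqP; rewrite mulf_eq0 => /orP [|].
  rewrite subr_eq0 => /eqP cs.
  have sr : s \is Num.real by apply/CrealP.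
  have : 0 <= s ^+ 2 := @real_exprn_even_ge0 _ 2 s sr isT.
  by rewrite sq3 oppr_ge0 lern0.
by rewrite addr_eq0 => /eqP.
Qed.

Lemma conj_zeta : zeta^* = -1 - zeta.
Proof.
rewrite /zeta fmorph_div rmorphD rmorphN rmorph1 /= conj_s rmorph_nat.
by field.
Qed.

Lemma eis_uniq (a b c d : int) :
  a%:~R + b%:~R * zeta = c%:~R + d%:~R * zeta :> algC -> a = c /\ b = d.
Proof.
move=> E.
have H : (b - d)%:~R * zeta = (c - a)%:~R :> algC.
  rewrite !intrB.
  have : (b%:~R - d%:~R) * zeta - (c%:~R - a%:~R)
     = (a%:~R + b%:~R * zeta) - (c%:~R + d%:~R * zeta) :> algC by ring.
  by rewrite E subrr => /eqP; rewrite subr_eq0 => /eqP.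
set m := c - a in H *; set n := b - d in H *.
have Z : ((m * m + m * n + n * n)%:~R : algC) = 0.
  rewrite !intrD !intrM -H.
  have -> : n%:~R * zeta * (n%:~R * zeta) + n%:~R * zeta * n%:~R + n%:~R * n%:~R
     = (n%:~R : algC) ^+ 2 * (zeta ^+ 2 + zeta + 1) by ring.
  by rewrite zeta_eq mulr0.
move/eqP: Z; rewrite intr_eq0 => /eqP Z.
have n0 : n = 0 by move: Z; nia.
move: H; rewrite n0 mul0r => /esym /eqP; rewrite intr_eq0 => /eqP m0.
by split; lia.
Qed.

Definition cfP (x : algC) (p : int * int) : Prop := x = p.1%:~R + p.2%:~R * zeta.
Definition cf (x : algC) : int * int := epsilon (inhabits (0, 0)) (cfP x).
Definition red (x : algC) : F := ((cf x).1 + (cf x).2)%:~R.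

Lemma redE (a b : int) : red (a%:~R + b%:~R * zeta) = (a + b)%:~R.
Proof.
rewrite /red /cf.
have := epsilon_spec (inhabits (0, 0)) (cfP (a%:~R + b%:~R * zeta)) (ex_intro _ (a, b) erefl).
by rewrite /cfP => /eis_uniq [<- <-].
Qed.

Lemma eisE (a b : int) : eisenstein (a%:~R + b%:~R * zeta).
Proof. by exists a, b. Qed.

Lemma int_eisE (a : int) : (a%:~R : algC) = a%:~R + 0%:~R * zeta.
Proof. by rewrite mul0r addr0. Qed.

Lemma eis_int (a : int) : eisenstein a%:~R.
Proof. by rewrite int_eisE; apply: eisE. Qed.

Lemma red_int (a : int) : red a%:~R = a%:~R.
Proof. by rewrite int_eisE redE addr0. Qed.

Lemma eis0 : eisenstein 0. Proof. exact: (eis_int 0). Qed.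
Lemma eis1 : eisenstein 1. Proof. exact: (eis_int 1). Qed.
Lemma red0 : red 0 = 0. Proof. exact: (red_int 0). Qed.
Lemma red1 : red 1 = 1. Proof. exact: (red_int 1). Qed.
Lemma redN1 : red (-1) = -1. Proof. exact: (red_int (-1)). Qed.
Lemma eisN1 : eisenstein (-1). Proof. exact: (eis_int (-1)). Qed.

Lemma eisD x y : eisenstein x -> eisenstein y -> eisenstein (x + y) /\ red (x + y) = red x + red y.
Proof.
move=> [a [b ->]] [c [d ->]].
have -> : a%:~R + b%:~R * zeta + (c%:~R + d%:~R * zeta)
   = (a + c)%:~R + (b + d)%:~R * zeta :> algC by rewrite !intrD; ring.
split; first exact: eisE.
by rewrite !redE !intrD; ring.
Qed.

Lemma eisN x : eisenstein x -> eisenstein (- x) /\ red (- x) = - red x.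
Proof.
move=> [a [b ->]].
have -> : - (a%:~R + b%:~R * zeta) = (- a)%:~R + (- b)%:~R * zeta :> algC by rewrite !intrN; ring.
split; first exact: eisE.
by rewrite !redE !intrD !intrN; ring.
Qed.

Lemma eisM x y : eisenstein x -> eisenstein y -> eisenstein (x * y) /\ red (x * y) = red x * red y.
Proof.
move=> [a [b ->]] [c [d ->]].
have -> : (a%:~R + b%:~R * zeta) * (c%:~R + d%:~R * zeta)
   = (a * c - b * d)%:~R + (a * d + b * c - b * d)%:~R * zeta :> algC.
  rewrite !intrD ?intrB ?intrN !intrM.
  transitivity ((a%:~R * c%:~R + (a%:~R * d%:~R + b%:~R * c%:~R) * zeta
     + b%:~R * d%:~R * zeta ^+ 2) : algC); first by ring.
  by rewrite zeta2; ring.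
split; first exact: eisE.
rewrite !redE.
have -> : a * c - b * d + (a * d + b * c - b * d) = (a + b) * (c + d) + (b * d) * (-3) by ring.
by rewrite !intrD !intrM m3; ring.
Qed.

Lemma eisC x : eisenstein x -> eisenstein x^* /\ red x^* = red x.
Proof.
move=> [a [b ->]].
have -> : (a%:~R + b%:~R * zeta)^* = (a - b)%:~R + (- b)%:~R * zeta :> algC.
  rewrite rmorphD rmorphM /= !rmorph_int conj_zeta ?intrB ?intrD ?intrN; ring.
split; first exact: eisE.
rewrite !redE.
have -> : a - b + - b = (a + b) + b * (-3) by ring.
by rewrite !intrD !intrM m3; ring.
Qed.

Arguments eisD {x y}.
Arguments eisN {x}.
Arguments eisM {x y}.
Arguments eisC {x}.

Lemma red_sum n (G : 'I_n -> algC) : (forall k, eisenstein (G k)) ->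
  eisenstein (\sum_k G k) /\ red (\sum_k G k) = \sum_k red (G k).
Proof.
move=> h; apply: (big_rec2 (fun y1 y2 => eisenstein y1 /\ red y1 = y2)).
  by split; [exact: eis0 | exact: red0].
move=> k y1 y2 _ [e1 r1]; have [e r] := eisD (h k) e1.
by split => //; rewrite r r1.
Qed.

Lemma red_mulmx m n p (A : 'M[algC]_(m, n)) (B : 'M[algC]_(n, p)) :
  mx_over_E A -> mx_over_E B ->
  mx_over_E (A *m B) /\ map_mx red (A *m B) = map_mx red A *m map_mx red B.
Proof.
move=> hA hB.
have h i j : eisenstein (\sum_k A i k * B k j) /\
             red (\sum_k A i k * B k j) = \sum_k red (A i k) * red (B k j).
  have [e r] := @red_sum n (fun k => A i k * B k j) (fun k => (eisM (hA i k) (hB k j)).1).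
  by split => //; rewrite r; apply: eq_bigr => k _; rewrite (eisM (hA i k) (hB k j)).2.
split; first by move=> i j; rewrite mxE; case: (h i j).
apply/matrixP => i j; rewrite !mxE (h i j).2.
by apply: eq_bigr => k _; rewrite !mxE.
Qed.

Arguments red_mulmx {m n p A B}.

Lemma adjC_over m n (A : 'M[algC]_(m, n)) : mx_over_E A ->
  mx_over_E (adjC A) /\ map_mx red (adjC A) = (map_mx red A)^T.
Proof.
move=> hA; split.
  by move=> i j; rewrite !mxE; case: (eisC (hA j i)).
by apply/matrixP => i j; rewrite !mxE; case: (eisC (hA j i)).
Qed.

Arguments adjC_over {m n A}.

Lemma Jh_over : mx_over_E Jh /\ map_mx red Jh = Jb.
Proof.
split.
  move=> i j; rewrite !mxE; case: ifP => _; first exact: eis1.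
  by case: ifP => _; [exact: eisN1 | exact: eis0].
apply/matrixP => i j; rewrite !mxE; case: ifP => _; first exact: red1.
by case: ifP => _; [exact: redN1 | exact: red0].
Qed.

Lemma one_over : mx_over_E (1%:M : 'M[algC]_4) /\ map_mx red (1%:M : 'M[algC]_4) = 1%:M.
Proof.
split; first by move=> i j; rewrite !mxE; case: (i == j); [exact: eis1 | exact: eis0].
by apply/matrixP => i j; rewrite !mxE; case: (i == j); [exact: red1 | exact: red0].
Qed.

Lemma adjC_mul m n p (A : 'M[algC]_(m, n)) (B : 'M[algC]_(n, p)) :
  adjC (A *m B) = adjC B *m adjC A.
Proof. by rewrite /adjC map_mxM trmx_mul. Qed.

Lemma adjC_delta (i : 'I_4) : adjC (delta_mx i 0 : 'cV[algC]_4) = delta_mx 0 i.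
Proof.
apply/matrixP => k l; rewrite !mxE rmorph_nat.
by rewrite andbC.
Qed.

Lemma form_ext (M N : 'M[algC]_4) :
  (forall a b : 'cV[algC]_4, (adjC a *m M *m b) 0 0 = (adjC a *m N *m b) 0 0) -> M = N.
Proof.
move=> h; apply/matrixP => i j.
have := h (delta_mx i 0) (delta_mx j 0).
by rewrite adjC_delta -!rowE -!colE !mxE.
Qed.

Lemma G3_props g : G3 g ->
  [/\ mx_over_E g,
      exists2 g', mx_over_E g' & map_mx red g' *m map_mx red g = 1%:M
    & pres (map_mx red g)].
Proof.
move=> [[hg [g' [hg' [e1 e2]]]] hf].
split => //.
  exists g' => //.
  by rewrite -(red_mulmx hg' hg).2 e2 one_over.2.
have E : adjC g *m Jh *m g = Jh.
  apply: form_ext => a b.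
  by move: (hf a b); rewrite /hform adjC_mul !mulmxA.
have [hag rag] := adjC_over hg.
have [hJ rJ] := Jh_over.
have [h1 r1] := red_mulmx hag hJ.
have [h2 r2] := red_mulmx h1 hg.
have T : (map_mx red g)^T *m Jb *m map_mx red g = Jb.
  by rewrite -rag -rJ -r1 -r2 E.
move=> c; rewrite /qm trmx_mul.
have -> : c^T *m (map_mx red g)^T *m Jb *m (map_mx red g *m c)
   = c^T *m ((map_mx red g)^T *m Jb *m map_mx red g) *m c by rewrite !mulmxA.
by rewrite T.
Qed.

Lemma eta_cases eta : 6.-primitive_root eta -> eta = - zeta \/ eta = 1 + zeta.
Proof.
move=> pr.
have e6 : eta ^+ 6 = 1 := prim_expr_order pr.
have e3 : eta ^+ 3 != 1 by rewrite -(prim_order_dvd pr).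
have e2 : eta ^+ 2 != 1 by rewrite -(prim_order_dvd pr).
have h3 : eta ^+ 3 + 1 = 0.
  have : (eta ^+ 3 - 1) * (eta ^+ 3 + 1) = 0.
    have -> : (eta ^+ 3 - 1) * (eta ^+ 3 + 1) = eta ^+ 6 - 1 by ring.
    by rewrite e6 subrr.
  by move/eqP; rewrite mulf_eq0 subr_eq0 (negbTE e3) /= => /eqP.
have h1 : eta + 1 != 0.
  by apply: contra e2; rewrite addr_eq0 => /eqP ->; rewrite sqrrN expr1n.
have h2 : (eta + zeta) * (eta - 1 - zeta) = 0.
  have k : (eta + 1) * ((eta + zeta) * (eta - 1 - zeta)) = 0.
    have -> : (eta + 1) * ((eta + zeta) * (eta - 1 - zeta))
       = (eta ^+ 3 + 1) - (eta + 1) * (zeta ^+ 2 + zeta + 1) by ring.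
    by rewrite h3 zeta_eq mulr0 subr0.
  by move/eqP: k; rewrite mulf_eq0 (negbTE h1) /= => /eqP.
move/eqP: h2; rewrite mulf_eq0 => /orP [/eqP h|/eqP h]; [left | right].
  by apply/eqP; rewrite -addr_eq0 h.
by apply/eqP; rewrite -subr_eq0 opprD addrA h.
Qed.

Lemma hex_odd g : is_hexflection g -> odd_perm (pf (map_mx red g)).
Proof.
move=> [b [eta [hb [hbb [pr ->]]]]].
have [ee re] : eisenstein eta /\ red eta = -1.
  case: (@eta_cases eta pr) => ->.
    have -> : - zeta = 0%:~R + (-1)%:~R * zeta :> algC by rewrite mulN1r add0r.
    by split; [apply: eisE | rewrite redE; apply/eqP].
  have -> : 1 + zeta = 1%:~R + 1%:~R * zeta :> algC by rewrite mul1r.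
  by split; [apply: eisE | rewrite redE two].
set s := (1 - eta) / hform b b.
have sE : s = eta - 1 by rewrite /s hbb invrN1 mulrN1 opprB.
have [es rs] : eisenstein s /\ red s = 1.
  rewrite sE; have [e r] := eisD ee eisN1; split => //.
  by rewrite r re redN1; apply/eqP.
set X := b *m adjC b *m Jh.
have [hab rab] := adjC_over hb.
have [hJ rJ] := Jh_over.
have [h1 r1] := red_mulmx hb hab.
have [hX rX] := red_mulmx h1 hJ.
set B := map_mx red b.
have XE : B *m B^T *m Jb = map_mx red X by rewrite rX r1 rab rJ.
have gE : map_mx red (hexflection b eta) = 1%:M - B *m B^T *m Jb.
  rewrite XE; apply/matrixP => i j.
  rewrite /hexflection -/s -/X.
  transitivity (red ((i == j)%:R - s * X i j)); first by rewrite !mxE.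
  have [eY rY] := eisM es (hX i j).
  have [eN rN] := eisN eY.
  have oij : eisenstein ((i == j)%:R) by case: (i == j); [exact: eis1 | exact: eis0].
  have [_ rD] := eisD oij eN.
  rewrite rD rN rY rs mul1r [RHS]mxE [(- (X ^ red)%sesqui) i j]mxE [(X ^ red)%sesqui i j]mxE [(1%:M : 'M[F]_4) i j]mxE.
  by congr (_ - _); case: (i == j); [exact: red1 | exact: red0].
have [h2 r2] := red_mulmx hab hJ.
have [h3 r3] := red_mulmx h2 hb.
have qB : qm B = -1.
  rewrite /qm -rab -rJ -r2 -r3 mxE.
  by move: hbb; rewrite /hform => ->; exact: redN1.
rewrite gE.
have -> : B = col4 (unc B) by rewrite col4K.
apply: odd_refl.
by rewrite -qmE col4K.
Qed.


Theorem lemma8p6 :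
  exists eps : 'M[algC]_4 -> int,
    (forall g, G3 g -> eps g = 1 \/ eps g = -1) /\
    (forall g k, G3 g -> G3 k -> eps (g *m k) = eps g * eps k) /\
    (forall g, is_hexflection g -> eps g = -1) /\
    eps (- 1%:M) = -1.
Proof.
exists (fun g => if odd_perm (pf (map_mx red g)) then -1 else 1).
split; [|split; [|split]].
- by move=> g _; case: ifP; [right|left].
- move=> g k hg hk.
  have [og [g' og' ig] pg] := @G3_props g hg.
  have [ok [k' ok' ik] pk] := @G3_props k hk.
  rewrite (red_mulmx og ok).2.
  set G := map_mx red g; set K := map_mx red k.
  have iG := @phi_inj _ _ pg ig.
  have iK := @phi_inj _ _ pk ik.
  have iGK : injective (phi (G *m K)).
    by move=> a c; rewrite !phiM // => /iG /iK.
  have -> : pf (G *m K) = (pf K * pf G)%g.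
    by apply/permP => x; rewrite permM !pfE // phiM.
  by rewrite odd_permM; case: (odd_perm (pf K)); case: (odd_perm (pf G)).
- by move=> g hx; rewrite (@hex_odd g hx).
have -> : map_mx red (- 1%:M : 'M[algC]_4) = - 1%:M.
  apply/matrixP => i j; rewrite !mxE.
  by case: (i == j) => /=; rewrite ?oppr0 ?red0 ?redN1.
by rewrite odd_neg.
Qed.
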